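(* Let $H=(U,(A_1,\dots,A_m))$ be a harmonic set system and suppose there exist $i<j$ with $A_i=A_j$. Then $A_1=A_2=\cdots=A_m$, or $(m,i,j)=(3,1,3)$.
   Context: For $I\subseteq[m]$, $H_I=\bigcap_{i\in I}A_i$ ($=U$ if $I=\emptyset$). The run decomposition of a finite set $I$ of positive integers is the partition of sizes, in nonincreasing order, of the maximal runs of consecutive integers in $I$. $H$ is harmonic if $|H_I|=|H_J|$ whenever $I,J\subseteq[m]$ have the same run decomposition. *)

(* Defs.v *)
From mathcomp Require Import all_boot.
Set Implicit Arguments. Unset Strict Implicit. Unset Printing Implicit Defensive.

(* A set system H = (U, (A_1,...,A_m)) is modelled by a finite type U (the
   ground set, playing the role of U) and a family A : 'I_m -> {set U};
   the ordinal k : 'I_m stands for the index k+1 of [m]. *)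

Definition HI (U : finType) (m : nat) (A : 'I_m -> {set U}) (I : {set 'I_m})
  : {set U} := \bigcap_(i in I) A i.

(* lengths of the maximal blocks of [true]s in a boolean sequence, with
   the current block length [cur] accumulated (zero lengths included). *)
Fixpoint runs_aux (cur : nat) (s : seq bool) : seq nat :=
  match s with
  | [::] => [:: cur]
  | b :: s' => if b then runs_aux cur.+1 s' else cur :: runs_aux 0 s'
  end.

Definition run_lengths (s : seq bool) : seq nat :=
  [seq n <- runs_aux 0 s | 0 < n].

Definition run_decomposition (m : nat) (I : {set 'I_m}) : seq nat :=
  sort geq (run_lengths [seq i \in I | i <- enum 'I_m]).

Definition harmonic (U : finType) (m : nat) (A : 'I_m -> {set U}) : Prop :=
  forall I J : {set 'I_m},
    run_decomposition I = run_decomposition J -> #|HI A I| = #|HI A J|.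

(* Main.v *)
Require Import Defs.
From mathcomp Require Import all_boot zify.

Definition rl c s := [seq n <- runs_aux c s | 0 < n].
Arguments rl : simpl never.

Lemma rl_false c s : rl c (false :: s) = (if 0 < c then [:: c] else [::]) ++ rl 0 s.
Proof. by rewrite /rl /=; case: c. Qed.
Lemma rl_true c s : rl c (true :: s) = rl c.+1 s.
Proof. by []. Qed.
Lemma rl_nil c : rl c [::] = if 0 < c then [:: c] else [::].
Proof. by rewrite /rl /=; case: c. Qed.

Lemma rl_skip p a d n : (forall x, a <= x < a + d -> p x = false) ->
  rl 0 (map p (iota a (d + n))) = rl 0 (map p (iota (a + d) n)).
Proof.
elim: d a => [|d IH] a H; first by rewrite addn0.
rewrite addSn /= H; last by apply/andP; split => //; lia.
rewrite rl_false /= IH ?addSnnS // => x /andP[h1 h2]; apply: H; apply/andP; split; lia.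
Qed.

Lemma rl_zero p a n : (forall x, a <= x -> p x = false) -> rl 0 (map p (iota a n)) = [::].
Proof.
elim: n a => [|n IH] a H /=; first by rewrite rl_nil.
rewrite H // rl_false /= IH // => x h; apply: H; lia.
Qed.

Lemma rl_single k r : rl 0 (map (fun n => n == k) (iota 0 (k + r.+1))) = [:: 1].
Proof.
rewrite rl_skip; last by move=> x /andP[_ h]; apply/negbTE; rewrite neq_ltn h.
rewrite add0n /= eqxx rl_true.
case: r => [|r] /=; first by rewrite rl_nil.
rewrite (_ : (k.+1 == k) = false); last by apply/negbTE; rewrite neq_ltn ltnSn orbT.
rewrite rl_false rl_zero // => x h; apply/negbTE; rewrite neq_ltn; apply/orP; right; lia.
Qed.

Lemma rl_adj k r : rl 0 (map (fun n => (n == k) || (n == k.+1)) (iota 0 (k + r.+2))) = [:: 2].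
Proof.
rewrite rl_skip; last by move=> x /andP[_ h]; apply/norP; split; apply/eqP; lia.
rewrite add0n /= eqxx rl_true eqxx orbT rl_true.
case: r => [|r] /=; first by rewrite rl_nil.
rewrite (_ : (k.+2 == k) || (k.+2 == k.+1) = false); last by apply/norP; split; apply/eqP; lia.
rewrite rl_false rl_zero // => x h; apply/norP; split; apply/eqP; lia.
Qed.

Lemma rl_far k d r : rl 0 (map (fun n => (n == k) || (n == k + d.+2)) (iota 0 (k + (d.+2 + r.+1)))) = [:: 1; 1].
Proof.
rewrite rl_skip; last by move=> x /andP[_ h]; apply/norP; split; apply/eqP; lia.
rewrite add0n /= eqxx rl_true.
rewrite (_ : (k.+1 == k) || (k.+1 == k + d.+2) = false); last by apply/norP; split; apply/eqP; lia.
rewrite rl_false /=.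
rewrite rl_skip; last by move=> x /andP[h1 h2]; apply/norP; split; apply/eqP; lia.
rewrite (_ : k.+2 + d = k + d.+2); last by lia.
rewrite /= eqxx orbT rl_true.
case: r => [|r] /=; first by rewrite rl_nil.
rewrite (_ : ((k + d.+2).+1 == k) || ((k + d.+2).+1 == k + d.+2) = false); last by apply/norP; split; apply/eqP; lia.
rewrite rl_false rl_zero // => x h; apply/norP; split; apply/eqP; lia.
Qed.

Lemma seqI m (I : {set 'I_m}) (p : nat -> bool) :
  (forall x : 'I_m, (x \in I) = p x) -> [seq x \in I | x <- enum 'I_m] = map p (iota 0 m).
Proof.
move=> H; rewrite (eq_map H) -val_enum_ord -map_comp //.
Qed.

Lemma rd1 m (k : 'I_m) : run_decomposition [set k] = [:: 1].
Proof.
rewrite /run_decomposition (@seqI _ _ (fun n => n == k)); last by move=> x; rewrite in_set1.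
have -> : iota 0 m = iota 0 (k + (m - k.+1).+1) by congr iota; have := ltn_ord k; lia.
by move: (rl_single k (m - k.+1)); rewrite /rl /run_lengths => ->.
Qed.

Lemma rd_adj m (k l : 'I_m) : nat_of_ord l = k.+1 -> run_decomposition [set k; l] = [:: 2].
Proof.
move=> El.
rewrite /run_decomposition (@seqI _ _ (fun n => (n == k) || (n == k.+1))); last by move=> x; rewrite in_set2 -El.
have -> : iota 0 m = iota 0 (k + (m - k.+2).+2) by congr iota; have := ltn_ord l; lia.
by move: (rl_adj k (m - k.+2)); rewrite /rl /run_lengths => ->.
Qed.

Lemma rd_far m (k l : 'I_m) : k.+1 < l -> run_decomposition [set k; l] = [:: 1; 1].
Proof.
move=> hl.
have El : nat_of_ord l = k + (l - k.+2).+2 by lia.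
rewrite /run_decomposition (@seqI _ _ (fun n => (n == k) || (n == k + (l - k.+2).+2))); last by move=> x; rewrite in_set2 -El.
have -> : iota 0 m = iota 0 (k + ((l - k.+2).+2 + (m - l.+1).+1)) by congr iota; have := ltn_ord l; lia.
by move: (rl_far k (l - k.+2) (m - l.+1)); rewrite /rl /run_lengths => ->.
Qed.

Lemma HI1 U m (A : 'I_m -> {set U}) k : HI A [set k] = A k.
Proof. by rewrite /HI big_set1. Qed.

Lemma HI2 U m (A : 'I_m -> {set U}) k l : k != l -> HI A [set k; l] = A k :&: A l.
Proof.
move=> kl; rewrite /HI (big_setD1 k) ?in_set2 ?eqxx //.
have -> : [set k; l] :\ k = [set l].
  apply/setP => x; rewrite !inE; case: (eqVneq x k) => [->|] /=; by rewrite ?(negbTE kl).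
by rewrite big_set1.
Qed.

Lemma eq_card U (B C : {set U}) : #|B :&: C| = #|B| -> #|C| = #|B| -> B = C.
Proof.
move=> h1 h2.
have e : B :&: C = B by apply/eqP; rewrite eqEcard subsetIl h1 leqnn.
have s : B \subset C by rewrite -e subsetIr.
by apply/eqP; rewrite eqEcard s h2 leqnn.
Qed.

Theorem proposition5p1 (U : finType) (m : nat) (A : 'I_m -> {set U})
    (i j : 'I_m) :
  harmonic A -> i < j -> A i = A j ->
  (forall k l : 'I_m, A k = A l) \/
  (m = 3 /\ nat_of_ord i = 0 /\ nat_of_ord j = 2).
Proof.
case: m A i j => [|m] A i j; first by case: i.
move=> H ij Aij.
have c1 k l : #|A k| = #|A l|.
  by have := H [set k] [set l]; rewrite !rd1 !HI1; apply.
have cadj (k l k' l' : 'I_m.+1) : nat_of_ord l = k.+1 -> nat_of_ord l' = k'.+1 ->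
    #|A k :&: A l| = #|A k' :&: A l'|.
  move=> h h'.
  have n1 : k != l by apply/eqP => e; rewrite e in h; lia.
  have n2 : k' != l' by apply/eqP => e; rewrite e in h'; lia.
  by rewrite -!HI2 //; apply: H; rewrite !rd_adj.
have cfar (k l k' l' : 'I_m.+1) : k.+1 < l -> k'.+1 < l' ->
    #|A k :&: A l| = #|A k' :&: A l'|.
  move=> h h'.
  have n1 : k != l by apply/eqP => e; rewrite e in h; lia.
  have n2 : k' != l' by apply/eqP => e; rewrite e in h'; lia.
  by rewrite -!HI2 //; apply: H; rewrite !rd_far.
have [ij'|ij'] : (nat_of_ord j = i.+1) \/ (i.+1 < j) by lia.
  left.
  have step n : n.+1 < m.+1 -> A (inord n) = A (inord n.+1).
    move=> hn; apply: eq_card; last by apply: c1.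
    rewrite (cadj _ _ i j) //; last by rewrite !inordK //; lia.
    by rewrite Aij setIid; apply: c1.
  have all n : n < m.+1 -> A (inord n) = A (inord 0).
    elim: n => [|n IH] hn //.
    by rewrite -step // IH //; lia.
  move=> k l; rewrite -(inord_val k) -(inord_val l) !all //.
have fareq a b : a.+1 < b -> b < m.+1 -> A (inord a) = A (inord b).
  move=> hab hb; apply: eq_card; last by apply: c1.
  rewrite (cfar _ _ i j) //; last by rewrite !inordK //; lia.
  by rewrite Aij setIid; apply: c1.
have [e3|m4] : (m.+1 = 3 /\ nat_of_ord i = 0 /\ nat_of_ord j = 2) \/ 3 < m.+1.
  have := ltn_ord j; lia.
  by right.
left.
have all n : n < m.+1 -> A (inord n) = A (inord 0).
  case: n => [|[|n]] hn //.
    by rewrite (fareq 1 3) // -(fareq 0 3).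
  by rewrite -(fareq 0 n.+2).
move=> k l; rewrite -(inord_val k) -(inord_val l) !all //.
Qed.
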